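(* Let $\Delta=\Delta_0*\dots*\Delta_n$ be a regular filtered euclidean simplex ($\Delta_n\ne\emptyset$). Then the chain map $\mu^*_\Delta\colon N^*(\Delta)\to\widetilde N^*(\Delta)$ is injective and its image is exactly $\widetilde N^*_{\overline0}(\Delta)=\{\omega\in\widetilde N^*(\Delta)\mid\|\omega\|_\ell\le0\text{ and }\|d\omega\|_\ell\le0\text{ for all }\ell\in\{1,\dots,n\}\}$; hence $\mu^*_\Delta\colon N^*(\Delta)\to\widetilde N^*_{\overline0}(\Delta)$ is an isomorphism.
   Context: Coefficients in a commutative ring $R$. For an euclidean simplex $\Delta$, $N_*(\Delta),N^*(\Delta)$ are the simplicial chain and cochain complexes, ${\bf 1}_F$ the cochain dual to a face $F$. For a face $F$ of $\Delta$, $(F,0)$ denotes $F$ as a face of the cone $c\Delta=\Delta*[\mathtt v]$, $(F,1)$ denotes the face $cF$, and $(\emptyset,1)=[\mathtt v]$. For a filtered simplex $\Delta=\Delta_0*\dots*\Delta_n$ (join decomposition, some $\Delta_i$ possibly empty), $\widetilde N^*(\Delta)=N^*(c\Delta_0)\otimes\dots\otimes N^*(c\Delta_{n-1})\otimes N^*(\Delta_n)$ and $\widetilde N_*(\Delta)=N_*(c\Delta_0)\otimes\dots\otimes N_*(c\Delta_{n-1})\otimes N_*(\Delta_n)$, with bases ${\bf 1}_{(F,\varepsilon)}={\bf 1}_{(F_0,\varepsilon_0)}\otimes\dots\otimes{\bf 1}_{(F_{n-1},\varepsilon_{n-1})}\otimes{\bf 1}_{F_n}$ resp. $(F_0,\varepsilon_0)\otimes\dots\otimes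 F_n$ ($\varepsilon_i\in\{0,1\}$, $F_i$ a face of $\Delta_i$ or empty with $\varepsilon_i=1$, $\varepsilon_n=0$). For $\ell\in\{1,\dots,n\}$, $\|{\bf 1}_{(F,\varepsilon)}\|_\ell=-\infty$ if $\varepsilon_{n-\ell}=1$, and $=\sum_{i>n-\ell}(\dim F_i+\varepsilon_i)$ if $\varepsilon_{n-\ell}=0$ (with $\dim\emptyset=-1$); for $\omega=\sum_b\lambda_b{\bf 1}_{(F_b,\varepsilon_b)}$, $\lambda_b\ne0$, $\|\omega\|_\ell=\max_b\|{\bf 1}_{(F_b,\varepsilon_b)}\|_\ell$, and $\|0\|_\ell=-\infty$. The chain map $\mu^\Delta_*\colon\widetilde N_*(\Delta)\to N_*(\Delta)$ sends $(F_0,\varepsilon_0)\otimes\dots\otimes(F_{n-1},\varepsilon_{n-1})\otimes F_n$ to the face $F_0*\dots*F_\ell$ of $\Delta$, where $\ell$ is the least $j$ with $\varepsilon_j=0$, if $\sum_i(\dim F_i+\varepsilon_i)=\dim(F_0*\dots*F_\ell)$, and to $0$ otherwise; $\mu^*_\Delta$ is its dual. *)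

(* Defs.v *)
From HB Require Import structures.
From mathcomp Require Import all_boot all_order all_algebra.
Set Implicit Arguments. Unset Strict Implicit. Unset Printing Implicit Defensive.
Import Order.TTheory GRing.Theory Num.Theory.
Local Open Scope ring_scope.

(** It is given by [n] and [k : 'I_n.+1 -> nat], [k i] = number of vertices of
  Delta_i (so dim Delta_i = k i - 1; Delta_i is empty iff k i = 0).
  The vertices of Delta are the ordinals of 'I_(nverts k), ordered as
  Delta_0's vertices, then Delta_1's, ..., then Delta_n's (join order);
  [block k i] is the vertex set of Delta_i. *)

Definition nverts (n : nat) (k : 'I_n.+1 -> nat) : nat := (\sum_(i < n.+1) k i)%N.

Definition offset (n : nat) (k : 'I_n.+1 -> nat) (i : 'I_n.+1) : nat :=
  (\sum_(j < n.+1 | (j < i)%N) k j)%N.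

Definition block (n : nat) (k : 'I_n.+1 -> nat) (i : 'I_n.+1) : {set 'I_(nverts k)} :=
  [set x : 'I_(nverts k) | (offset k i <= x < offset k i + k i)%N].

(** Faces of Delta (nonempty sets of vertices): basis of N_*(Delta). *)
Definition face (n : nat) (k : 'I_n.+1 -> nat) : finType :=
  {F : {set 'I_(nverts k)} | F != set0}.

Definition pos (N : nat) (S : {set 'I_N}) (x : 'I_N) : nat :=
  #|[set y in S | (y < x)%N]|.

(** Coefficient of the face G in the boundary of the face F in N_*(Delta):
    d[x_0..x_p] = sum_t (-1)^t [x_0..^x_t..x_p]. *)
Definition face_bdry (n : nat) (k : 'I_n.+1 -> nat) (R : pzRingType)
    (F G : face k) : R :=
  \sum_(x in val F)
     (if val G == val F :\ x then (-1) ^+ pos (val F) x else 0).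

(** Basis of  N~_*(Delta) = N_*(cDelta_0) (x) ... (x) N_*(cDelta_(n-1)) (x) N_*(Delta_n).
  A basis element (F_0,e_0) (x) ... (x) (F_(n-1),e_(n-1)) (x) F_n is encoded by the
  pair (F, e) where F = F_0 u ... u F_n (so F_i = F :&: block k i) and
  e = { i | e_i = 1 }.  Validity: F_i empty forces e_i = 1, and e_n = 0
  (hence F_n is nonempty). *)
Definition tvalid (n : nat) (k : 'I_n.+1 -> nat)
    (p : {set 'I_(nverts k)} * {set 'I_n.+1}) : bool :=
  [forall i : 'I_n.+1, (p.1 :&: block k i == set0) ==> (i \in p.2)]
  && (ord_max \notin p.2).

Definition tbasis (n : nat) (k : 'I_n.+1 -> nat) : finType :=
  {p : {set 'I_(nverts k)} * {set 'I_n.+1} | tvalid p}.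

Definition tF (n : nat) (k : 'I_n.+1 -> nat) (a : tbasis k) := (val a).1.
Definition te (n : nat) (k : 'I_n.+1 -> nat) (a : tbasis k) := (val a).2.

(** dim F_i + e_i  (with dim emptyset = -1); nonnegative by validity. *)
Definition cdim (n : nat) (k : 'I_n.+1 -> nat) (a : tbasis k) (i : 'I_n.+1) : nat :=
  (#|tF a :&: block k i| + (i \in te a)).-1.

(** Koszul sign exponent: degree of the factors before the i-th one. *)
Definition prefix (n : nat) (k : 'I_n.+1 -> nat) (a : tbasis k) (i : 'I_n.+1) : nat :=
  (\sum_(j < n.+1 | (j < i)%N) cdim a j)%N.

(** Coefficient of b in the boundary of a in N~_*(Delta) (tensor product
  differential with Koszul signs; in the cone cF_i = F_i * [v] the cone
  vertex v is the last vertex):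
  - removing a vertex x of F_i (i = block of x), sign (-1)^(prefix + pos of x in F_i);
  - removing the cone vertex of (F_i,1), giving (F_i,0), sign (-1)^(prefix + #|F_i|).
  Terms that would be the empty face are excluded since b ranges over valid
  basis elements. *)
Definition tbdry (n : nat) (k : 'I_n.+1 -> nat) (R : pzRingType)
    (a b : tbasis k) : R :=
  \sum_(i < n.+1) \sum_(x in tF a :&: block k i)
      (if (tF b == tF a :\ x) && (te b == te a)
       then (-1) ^+ (prefix a i + pos (tF a :&: block k i) x) else 0)
  + \sum_(i < n.+1)
      (if (i \in te a) && (tF b == tF a) && (te b == te a :\ i)
       then (-1) ^+ (prefix a i + #|tF a :&: block k i|) else 0).

(** mu_* : least l with e_l = 0, and the face F_0 * ... * F_l. *)
Definition lead (n : nat) (k : 'I_n.+1 -> nat) (a : tbasis k) : 'I_n.+1 :=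
  [arg min_(j < ord_max | j \notin te a) (j : nat)].

Definition mu_face (n : nat) (k : 'I_n.+1 -> nat) (a : tbasis k) : {set 'I_(nverts k)} :=
  tF a :&: \bigcup_(j < n.+1 | (j <= lead a)%N) block k j.

Definition mu_coef (n : nat) (k : 'I_n.+1 -> nat) (R : pzRingType)
    (a : tbasis k) (G : face k) : R :=
  if (val G == mu_face a)
     && ((\sum_(i < n.+1) cdim a i)%N == #|mu_face a|.-1)
  then 1 else 0.

(** Cochains: N^*(Delta) and N~^*(Delta) as functions on the bases
  (omega = sum_b omega(b) 1_b); the coboundary is the dual of the boundary. *)
Definition cochain (n : nat) (k : 'I_n.+1 -> nat) (R : pzRingType) :=
  {ffun face k -> R}.
Definition tcochain (n : nat) (k : 'I_n.+1 -> nat) (R : pzRingType) :=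
  {ffun tbasis k -> R}.

Definition tcobdry (n : nat) (k : 'I_n.+1 -> nat) (R : pzRingType)
    (w : tcochain k R) : tcochain k R :=
  [ffun a => \sum_(b : tbasis k) tbdry R a b * w b].

Definition mu_star (n : nat) (k : 'I_n.+1 -> nat) (R : pzRingType)
    (w : cochain k R) : tcochain k R :=
  [ffun a => \sum_(G : face k) mu_coef R a G * w G].

(** The perverse degree ||.||_l with values in Z u {-oo} (None = -oo). *)
Definition omax (x y : option int) : option int :=
  match x, y with
  | None, _ => y
  | _, None => x
  | Some u, Some v => Some (Num.max u v)
  end.

Definition ole0 (x : option int) : bool :=
  if x is Some u then u <= 0 else true.

Definition bnorm (n : nat) (k : 'I_n.+1 -> nat) (l : nat) (a : tbasis k) : option int :=
  if (inord (n - l) : 'I_n.+1) \in te a then None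
  else Some (\sum_(i < n.+1 | (n - l < i)%N) ((#|tF a :&: block k i|%:Z - 1)
                                              + (i \in te a)%:Z)).

Definition tnorm (n : nat) (k : 'I_n.+1 -> nat) (R : pzRingType) (l : nat)
    (w : tcochain k R) : option int :=
  \big[omax/None]_(a : tbasis k | w a != 0) bnorm l a.

Definition tN0 (n : nat) (k : 'I_n.+1 -> nat) (R : pzRingType)
    (w : tcochain k R) : Prop :=
  forall l : nat, (1 <= l <= n)%N ->
    ole0 (tnorm l w) /\ ole0 (tnorm l (tcobdry w)).

(* Main.v *)
Require Import Defs.
From HB Require Import structures.
From mathcomp Require Import all_boot all_order all_algebra.
From mathcomp Require Import zify.
Set Implicit Arguments. Unset Strict Implicit. Unset Printing Implicit Defensive.
Import Order.TTheory GRing.Theory Num.Theory.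

Section Blocks.
Variable n : nat.
Variable k : 'I_n.+1 -> nat.

Definition kn (j : nat) : nat := k (inord j).
Definition S (m : nat) : nat := (\sum_(0 <= j < m) kn j)%N.

Lemma offsetE (i : 'I_n.+1) : offset k i = S i.
Proof.
rewrite /offset /S big_mkord (big_ord_widen _ _ (ltnW (ltn_ord i))).
by apply: eq_bigr => j _; rewrite /kn inord_val.
Qed.

Lemma nvertsE : nverts k = S n.+1.
Proof. by rewrite /nverts /S big_mkord; apply: eq_bigr => j _; rewrite /kn inord_val. Qed.

Lemma S_mono m m' : m <= m' -> S m <= S m'.
Proof. by move=> h; rewrite /S (big_cat_nat (leq0n m) h) leq_addr. Qed.

Lemma SS m : S m.+1 = S m + kn m.
Proof. by rewrite /S big_nat_recr. Qed.

Lemma S_lt i j : i < j -> S i + kn i <= S j.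
Proof. by move=> h; rewrite -SS; apply: S_mono. Qed.

Lemma cover_nat x m : x < S m -> exists2 i, i < m & S i <= x < S i + kn i.
Proof.
elim: m => [|m IH]; first by rewrite /S big_geq.
rewrite SS => h; case: (ltnP x (S m)) => h2.
  by case: (IH h2) => i im hi; exists i => //; apply: ltnW.
by exists m => //; rewrite h2 h.
Qed.

Lemma mem_blockE (x : 'I_(nverts k)) i :
  (x \in block k i) = (S i <= x < S i + kn i).
Proof. by rewrite inE offsetE /kn inord_val. Qed.

Lemma block_cover (x : 'I_(nverts k)) : exists i, x \in block k i.
Proof.
have := ltn_ord x; rewrite {2}nvertsE => /cover_nat [i lti hi].
by exists (Ordinal lti); rewrite mem_blockE.
Qed.

Lemma block_uniq (x : 'I_(nverts k)) i j :
  x \in block k i -> x \in block k j -> i = j.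
Proof.
rewrite !mem_blockE => /andP [h1 h2] /andP [h3 h4]; apply/val_inj => /=.
case: (ltngtP i j) => // h.
  by have := S_lt h; lia.
by have := S_lt h; lia.
Qed.

Definition blk (x : 'I_(nverts k)) : 'I_n.+1 := odflt ord0 [pick i | x \in block k i].

Lemma blockP x i : (x \in block k i) = (blk x == i).
Proof.
rewrite /blk; case: pickP => [j hj|h] /=.
  apply/idP/eqP => [h|<-] //; exact: block_uniq hj h.
by case: (block_cover x) => j hj; have := h j; rewrite hj.
Qed.

Lemma in_blk x : x \in block k (blk x).
Proof. by rewrite blockP. Qed.

Lemma card_blocks (A : {set 'I_(nverts k)}) :
  #|A| = (\sum_(i < n.+1) #|A :&: block k i|)%N.
Proof.
rewrite -sum1_card (partition_big blk xpredT) //=.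
apply: eq_bigr => i _; rewrite -sum1_card; apply: eq_bigl => x.
by rewrite inE blockP.
Qed.

End Blocks.

Section Cnt.
Variable n : nat.
Variable k : 'I_n.+1 -> nat.
Local Notation pair := ({set 'I_(nverts k)} * {set 'I_n.+1})%type.

Definition cnt (p : pair) (i : 'I_n.+1) : nat := #|p.1 :&: block k i| + (i \in p.2).

Definition Mp (p : pair) : bool :=
  [forall i : 'I_n.+1, forall j : 'I_n.+1, ((j < i) && (j \notin p.2)) ==> (cnt p i == 1)].

Lemma tvalidP (p : pair) :
  tvalid p = [forall i, (p.1 :&: block k i == set0) ==> (i \in p.2)] && (ord_max \notin p.2).
Proof. by []. Qed.

Lemma valid_cnt_p (p : pair) i : tvalid p -> 0 < cnt p i.
Proof.
case/andP => /forallP /(_ i) h _; rewrite /cnt.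
case: (boolP (i \in p.2)) => hi; first by rewrite addn1.
rewrite addn0 card_gt0; apply/negP => /eqP e0; by move: h; rewrite e0 eqxx (negbTE hi).
Qed.

Lemma valid_cnt (a : tbasis k) i : 0 < cnt (val a) i.
Proof. exact: valid_cnt_p (valP a). Qed.

Lemma valid_max (a : tbasis k) : ord_max \notin te a.
Proof. by case/andP: (valP a). Qed.

Lemma valid_nonempty (a : tbasis k) i : i \notin te a -> tF a :&: block k i != set0.
Proof.
move=> hi; case/andP: (valP a) => /forallP /(_ i) h _.
by apply: contra hi => h2; move: h; rewrite h2.
Qed.

Lemma leadP (a : tbasis k) : lead a \notin te a /\ forall j : 'I_n.+1, j < lead a -> j \in te a.
Proof.
rewrite /lead; case: arg_minnP; first exact: valid_max.
move=> l hl hmin; split => // j hj; apply/negPn/negP => hj'.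
by have := hmin j hj'; rewrite leqNgt hj.
Qed.

Lemma lead_eq (a : tbasis k) (l : 'I_n.+1) :
  l \notin te a -> (forall j : 'I_n.+1, j < l -> j \in te a) -> lead a = l.
Proof.
move=> h1 h2; case: (leadP a) => h3 h4; apply/val_inj/eqP; rewrite eqn_leq.
apply/andP; split; rewrite leqNgt; apply/negP => h.
  by move: (h4 _ h); rewrite (negbTE h1).
by move: (h2 _ h); rewrite (negbTE h3).
Qed.

Lemma Mp_lead (a : tbasis k) :
  Mp (val a) = [forall i : 'I_n.+1, (lead a < i) ==> (cnt (val a) i == 1)].
Proof.
case: (leadP a) => h1 h2.
apply/forallP/forallP => h i.
  apply/implyP => hi; move/forallP: (h i) => /(_ (lead a)); rewrite hi h1; exact.
apply/forallP => j; apply/implyP => /andP [hji hj]; move/implyP: (h i); apply.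
case: (ltnP j (lead a)) => hjl; first by move: (h2 _ hjl); rewrite (negbTE hj).
exact: leq_ltn_trans hjl hji.
Qed.

Lemma ole0_omax x y : ole0 (omax x y) = ole0 x && ole0 y.
Proof. by case: x => [u|]; case: y => [v|] //=; rewrite ?andbT // ge_max. Qed.

Lemma ole0_tnorm (R : pzRingType) l (w : tcochain k R) :
  ole0 (tnorm l w) = [forall a, (w a != 0)%R ==> ole0 (bnorm l a)].
Proof.
by rewrite /tnorm (big_morph ole0 ole0_omax (id2 := None) (erefl true)) big_andE.
Qed.

Lemma bnorm_all (a : tbasis k) :
  (forall l, 1 <= l <= n -> ole0 (bnorm l a)) <-> Mp (val a).
Proof.
have term i : (((#|tF a :&: block k i|%:Z - 1) + (i \in te a)%:Z) = (cnt (val a) i)%:Z - 1)%R.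
  by rewrite /cnt /tF /te PoszD addrAC.
have tge0 i : (0 <= (cnt (val a) i)%:Z - 1)%R.
  by rewrite subr_ge0 lez_nat valid_cnt.
split.
- move=> h; apply/forallP => i; apply/forallP => j; apply/implyP => /andP [hji hj].
  have hjn : j < n by have := ltn_ord i; lia.
  have := h (n - j) ltac:(lia); rewrite /bnorm.
  have -> : (inord (n - (n - j)) : 'I_n.+1) = j.
    by apply/val_inj; rewrite /= inordK; lia.
  rewrite (negbTE hj) /=.
  under eq_bigr => i' _ do rewrite term.
  have e : (n - (n - j) = j)%N by lia.
  rewrite e => hs.
  have hs0 : (\sum_(i0 < n.+1 | (j < i0)%N) ((cnt (val a) i0)%:Z - 1) = 0)%R.
    by apply/eqP; rewrite eq_le hs sumr_ge0.
  have := psumr_eq0P (fun i _ => tge0 i) hs0 (i := i).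
  by move=> /(_ hji) /eqP; rewrite subr_eq0 => /eqP [->].
- move=> /forallP h l hl; rewrite /bnorm.
  case: ifP => // hj /=.
  rewrite big1 // => i hi; rewrite term; apply/eqP; rewrite subr_eq0.
  move/forallP: (h i) => /(_ (inord (n - l))) /implyP; rewrite hj inordK; last by lia.
  by rewrite hi => /(_ isT) /eqP ->.
Qed.

End Cnt.

Section Mu.
Variable n : nat.
Variable k : 'I_n.+1 -> nat.

Lemma in_bigcup_le (x : 'I_(nverts k)) (l : 'I_n.+1) :
  (x \in \bigcup_(j < n.+1 | (j <= l)%N) block k j) = (blk x <= l).
Proof.
apply/bigcupP/idP => [[j hj]|h]; first by rewrite blockP => /eqP ->.
by exists (blk x) => //; exact: in_blk.
Qed.

Lemma mu_faceP (a : tbasis k) x : (x \in mu_face a) = (x \in tF a) && (blk x <= lead a).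
Proof. by rewrite /mu_face inE in_bigcup_le. Qed.

Lemma mu_face_block (a : tbasis k) i :
  mu_face a :&: block k i = if (i <= lead a)%N then tF a :&: block k i else set0.
Proof.
apply/setP => x; rewrite inE mu_faceP blockP.
case: (boolP (blk x == i)) => [/eqP <-|hx].
  by case: ifP => h; rewrite ?andbT ?andbF ?in_setI ?in_set0 ?in_blk ?andbT.
by rewrite andbF; case: ifP => _; rewrite ?in_setI ?in_set0 ?blockP ?(negbTE hx) ?andbF.
Qed.

Lemma mucond (a : tbasis k) :
  ((\sum_(i < n.+1) cdim a i)%N == #|mu_face a|.-1) = Mp (val a).
Proof.
set l := lead a.
have [hl1 hl2] := leadP a.
have Fl : 0 < #|tF a :&: block k l| by rewrite card_gt0; apply: valid_nonempty.
have e1 : (\sum_(i < n.+1) cdim a i =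
   \sum_(i < n.+1) (if (i < l)%N then #|tF a :&: block k i| else 0)
   + (#|tF a :&: block k l|).-1
   + \sum_(i < n.+1) (if (l < i)%N then (cnt (val a) i).-1 else 0))%N.
  rewrite -[in X in (_ + X + _)%N](big_pred1_eq addn l (fun i => (#|tF a :&: block k i|).-1)).
  rewrite big_mkcond /= -!big_split /=; apply: eq_bigr => i _.
  rewrite /cdim /cnt /tF /te /=.
  case: (ltngtP i l) => h.
  - have := hl2 _ h; rewrite /te => ->; have -> : (i == l) = false by apply/negbTE; rewrite neq_ltn h.
    by rewrite addn1 !addn0.
  - have -> : (i == l) = false by apply/negbTE; rewrite neq_ltn h orbT.
    by rewrite add0n.
  - have ee : i = l by apply/val_inj.
    rewrite ee; clear h ee.
    by rewrite eqxx (negbTE hl1) !addn0 add0n.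
have e2 : (#|mu_face a| =
   \sum_(i < n.+1) (if (i < l)%N then #|tF a :&: block k i| else 0)
   + #|tF a :&: block k l|)%N.
  rewrite card_blocks.
  rewrite -[in X in (_ + X)%N](big_pred1_eq addn l (fun i => #|tF a :&: block k i|)).
  rewrite big_mkcond /= -!big_split /=; apply: eq_bigr => i _.
  rewrite mu_face_block leq_eqVlt.
  case: (ltngtP i l) => h /=.
  - have -> : (i == l) = false by apply/negbTE; rewrite neq_ltn h.
    by rewrite addn0.
  - have -> : (i == l) = false by apply/negbTE; rewrite neq_ltn h orbT.
    by rewrite cards0.
  - have ee : i = l by apply/val_inj.
    by rewrite ee eqxx.
rewrite e1 e2 Mp_lead.
set A := (\sum_(i < n.+1) _)%N.
set C := (\sum_(i < n.+1) _)%N.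
have -> : ((A + (#|tF a :&: block k l|).-1 + C) == (A + #|tF a :&: block k l|).-1) = (C == 0).
  by apply/eqP/eqP; lia.
rewrite /C -big_mkcond sum_nat_eq0; apply/forallP/forallP => h i; apply/implyP => hi;
  have := implyP (h i) hi; have := valid_cnt a i; lia.
Qed.

Lemma mu_coefE (R : pzRingType) (a : tbasis k) (G : face k) :
  mu_coef R a G = if (val G == mu_face a) && Mp (val a) then 1%R else 0%R.
Proof. by rewrite /mu_coef mucond. Qed.

Lemma mu_starE (R : pzRingType) (v : cochain k R) (a : tbasis k) :
  mu_star v a = (\sum_(G : face k) (if (val G == mu_face a) && Mp (val a) then v G else 0))%R.
Proof.
by rewrite ffunE; apply: eq_bigr => G _; rewrite mu_coefE; case: ifP; rewrite ?mul1r ?mul0r.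
Qed.

End Mu.

Section Cob.
Variable n : nat.
Variable k : 'I_n.+1 -> nat.
Variable R : pzRingType.
Local Notation pair := ({set 'I_(nverts k)} * {set 'I_n.+1})%type.
Local Open Scope ring_scope.

Definition gext (g : tcochain k R) (p : pair) : R :=
  match (insub p : option (tbasis k)) with Some b => g b | None => 0 end.

Lemma gext_val g (b : tbasis k) : gext g (val b) = g b.
Proof. by rewrite /gext valK. Qed.

Lemma pairE (c : tbasis k) : (tF c, te c) = val c.
Proof. by rewrite /tF /te -surjective_pairing. Qed.

Definition supp (g : tcochain k R) := forall b, g b != 0 -> Mp (val b).

Lemma gext_notMp g p : supp g -> ~~ Mp p -> gext g p = 0.
Proof.
move=> hs hp; rewrite /gext; case: insubP => // b _ hb.
by apply/eqP; apply: contraNT hp => /hs; rewrite hb.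
Qed.

Lemma sum_sel (g : tcochain k R) A E (s : R) :
  \sum_(b : tbasis k) (if (tF b == A) && (te b == E) then s else 0) * g b = s * gext g (A, E).
Proof.
rewrite /gext; case: insubP => [u _ hu|hn].
  rewrite (bigD1 u) //= big1 ?addr0; last first.
    move=> b hb; case: ifP; rewrite ?mul0r // => /andP [/eqP h1 /eqP h2].
    suff e : b = u by rewrite e eqxx in hb.
    by apply/val_inj; rewrite hu -h1 -h2 /tF /te -surjective_pairing.
  by rewrite /tF /te hu /= !eqxx.
rewrite big1 ?mulr0 // => b _; case: ifP; rewrite ?mul0r // => /andP [/eqP h1 /eqP h2].
by move: hn; rewrite -h1 -h2 /tF /te -surjective_pairing (valP b).
Qed.

Lemma tcobdryE (g : tcochain k R) (c : tbasis k) :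
  tcobdry g c =
  \sum_(i < n.+1) \sum_(x in tF c :&: block k i)
      ((-1) ^+ (Defs.prefix c i + pos (tF c :&: block k i) x) * gext g (tF c :\ x, te c))
  + \sum_(i < n.+1)
      (if i \in te c then (-1) ^+ (Defs.prefix c i + #|tF c :&: block k i|) * gext g (tF c, te c :\ i)
       else 0).
Proof.
rewrite ffunE; under eq_bigr do rewrite /tbdry mulrDl.
rewrite big_split /=; congr (_ + _).
  under eq_bigr do rewrite mulr_suml.
  rewrite exchange_big /=; apply: eq_bigr => i _.
  under eq_bigr do rewrite mulr_suml.
  rewrite exchange_big /=; apply: eq_bigr => x _.
  by rewrite sum_sel.
under eq_bigr do rewrite mulr_suml.
rewrite exchange_big /=; apply: eq_bigr => i _.
case: (boolP (i \in te c)) => hi.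
  rewrite -sum_sel; apply: eq_bigr => b _; rewrite andTb.
  by case: (tF b == tF c); case: (te b == te c :\ i).
by rewrite big1 // => b _; rewrite andFb mul0r.
Qed.

Lemma cnt_delv (A : {set 'I_(nverts k)}) E x i :
  cnt (A :\ x, E) i = if x \in A :&: block k i then (cnt (A, E) i).-1 else cnt (A, E) i.
Proof.
rewrite /cnt /=; case: ifP => hx.
  have -> : (A :\ x) :&: block k i = (A :&: block k i) :\ x.
    by apply/setP => z; rewrite !inE; case: (z == x); rewrite ?andbF ?andbT.
  by rewrite (cardsD1 x (A :&: block k i)) hx.
have -> : (A :\ x) :&: block k i = (A :&: block k i).
  apply/setP => z; rewrite !inE; case: (boolP (z == x)) => // /eqP ->.
  by move: hx; rewrite !inE => ->.
by [].
Qed.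

Lemma cnt_dele (A : {set 'I_(nverts k)}) E j i :
  cnt (A, E :\ j) i = if (j == i) && (i \in E) then (cnt (A, E) i).-1 else cnt (A, E) i.
Proof.
rewrite /cnt /= !inE; case: (boolP (j == i)) => [/eqP ->|h] /=.
  by rewrite eqxx /=; case: (i \in E); rewrite ?addn1 ?addn0.
by rewrite eq_sym (negbTE h).
Qed.

Lemma notMp_wit (p : pair) (i0 j0 : 'I_n.+1) :
  (j0 < i0)%N -> j0 \notin p.2 -> (cnt p i0 != 1)%N -> ~~ Mp p.
Proof.
move=> h1 h2 h3; apply/negP => /forallP /(_ i0) /forallP /(_ j0).
by rewrite h1 h2 (negbTE h3).
Qed.

Section Key.
Variables (g : tcochain k R) (c : tbasis k) (i0 j0 : 'I_n.+1).
Hypotheses (hg : supp g) (hji : (j0 < i0)%N) (hj : j0 \notin te c).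
Hypothesis (h2 : (2 <= cnt (val c) i0)%N).

Lemma key_general :
  tcobdry g c =
  \sum_(x in tF c :&: block k i0)
      ((-1) ^+ (Defs.prefix c i0 + pos (tF c :&: block k i0) x) * gext g (tF c :\ x, te c))
  + (if i0 \in te c then (-1) ^+ (Defs.prefix c i0 + #|tF c :&: block k i0|) * gext g (tF c, te c :\ i0)
       else 0).
Proof.
rewrite tcobdryE; congr (_ + _).
  rewrite (bigD1 i0) //= [X in _ + X]big1 ?addr0 // => i hi.
  rewrite big1 // => x hx; rewrite gext_notMp ?mulr0 //.
  apply: (notMp_wit hji) => //; rewrite cnt_delv.
  have -> : (x \in tF c :&: block k i0) = false.
    apply/negbTE; move: hx; rewrite !in_setI !blockP => /andP [_ /eqP ->]; by rewrite (negbTE hi) andbF.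
  by rewrite pairE; apply/eqP => h; move: h2; rewrite h.
rewrite (bigD1 i0) //= [X in _ + X]big1 ?addr0 // => i hi.
case: ifP => // _; rewrite gext_notMp ?mulr0 //.
apply: (notMp_wit hji); first by rewrite !inE negb_and hj orbT.
rewrite cnt_dele (negbTE hi) /= pairE.
by apply/eqP => h; move: h2; rewrite h.
Qed.

Lemma key3 : (3 <= cnt (val c) i0)%N -> tcobdry g c = 0.
Proof.
move=> h3; rewrite key_general big1 ?add0r.
  case: ifP => // hi; rewrite gext_notMp ?mulr0 //.
  apply: (notMp_wit hji); first by rewrite !inE negb_and hj orbT.
  rewrite cnt_dele eqxx hi /= pairE.
  by apply/eqP => h; move: h3 h; lia.
move=> x hx; rewrite gext_notMp ?mulr0 //.
apply: (notMp_wit hji) => //; rewrite cnt_delv hx pairE.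
by apply/eqP => h; move: h3 h; lia.
Qed.

End Key.

Lemma pos1 (x : 'I_(nverts k)) : pos [set x] x = 0%N.
Proof. by rewrite /pos; apply: eq_card0 => z; rewrite !inE; case: eqP => // ->; rewrite ltnn. Qed.

Lemma pos2x (x y : 'I_(nverts k)) : (x < y)%N -> pos [set x; y] x = 0%N.
Proof.
move=> h; rewrite /pos; apply: eq_card0 => z; rewrite !inE.
by case: eqP => [->|_]; case: eqP => [->|_] //=; rewrite ?ltnn // ltnNge ltnW.
Qed.

Lemma pos2y (x y : 'I_(nverts k)) : (x < y)%N -> pos [set x; y] y = 1%N.
Proof.
move=> h; rewrite /pos -(cards1 x); apply: eq_card => z; rewrite !inE.
case: (boolP (z == x)) => [/eqP->|hzx] /=; first by rewrite h. by case: (boolP (z == y)) => [/eqP->|] /=; rewrite ?ltnn.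
Qed.

Section Key2.
Variables (g : tcochain k R) (c : tbasis k) (i0 j0 : 'I_n.+1).
Hypotheses (hg : supp g) (hji : (j0 < i0)%N) (hj : j0 \notin te c).

Lemma key2a x : tF c :&: block k i0 = [set x] -> i0 \in te c ->
  tcobdry g c = (-1) ^+ Defs.prefix c i0 * (gext g (tF c :\ x, te c) - gext g (tF c, te c :\ i0)).
Proof.
move=> hF hi.
have h2 : (2 <= cnt (val c) i0)%N by rewrite /cnt -/(tF c) hF cards1 -/(te c) hi.
rewrite (key_general hg hji hj h2) hi hF big_set1 pos1 cards1 addn0 exprD expr1.
by rewrite mulrN1 mulNr mulrBr.
Qed.

Lemma key2b (x y : 'I_(nverts k)) : (x < y)%N -> tF c :&: block k i0 = [set x; y] -> i0 \notin te c ->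
  tcobdry g c = (-1) ^+ Defs.prefix c i0 * (gext g (tF c :\ x, te c) - gext g (tF c :\ y, te c)).
Proof.
move=> hxy hF hi.
have hne : x != y by rewrite neq_ltn hxy.
have h2 : (2 <= cnt (val c) i0)%N by rewrite /cnt -/(tF c) hF cards2 hne.
rewrite (key_general hg hji hj h2) (negbTE hi) addr0 hF.
rewrite big_setU1 /= ?inE // big_set1 pos2x // pos2y // addn0 exprD expr1.
by rewrite mulrN1 mulNr mulrBr.
Qed.

End Key2.

End Cob.

Section Twin.
Variable n : nat.
Variable k : 'I_n.+1 -> nat.
Local Notation pair := ({set 'I_(nverts k)} * {set 'I_n.+1})%type.

Lemma tvalid_cnt (p : pair) :
  tvalid p = [forall i, 0 < cnt p i] && (ord_max \notin p.2).
Proof.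
rewrite tvalidP; congr andb; apply/forallP/forallP => h i.
  move: (h i); rewrite /cnt; case: (boolP (i \in p.2)) => hi; rewrite ?addn1 ?addn0 // => /implyP himp.
  rewrite card_gt0; apply/negP => /eqP e0; by have := himp (introT eqP e0).
apply/implyP => /eqP e0; move: (h i); rewrite /cnt e0 cards0 add0n.
by case: (i \in p.2).
Qed.

Lemma lead_le (b : tbasis k) (j : 'I_n.+1) : j \notin te b -> lead b <= j.
Proof.
case: (leadP b) => _ h hj; rewrite leqNgt; apply/negP => hl.
by move: (h _ hl); rewrite (negbTE hj).
Qed.

Lemma cnt_eq_block (p q : pair) (i : 'I_n.+1) :
  (forall x, blk x == i -> (x \in p.1) = (x \in q.1)) -> (i \in p.2) = (i \in q.2) ->
  cnt p i = cnt q i.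
Proof.
move=> h1 h2; rewrite /cnt h2; congr (_ + _); apply: eq_card => x.
rewrite !in_setI blockP; case: (boolP (blk x == i)) => hx; last by rewrite !andbF.
by rewrite h1.
Qed.

Section TwinS.
Variables (b1 b2 : tbasis k) (i0 : 'I_n.+1).
Hypothesis H1 : forall i, i != i0 -> (i \in te b1) = (i \in te b2).
Hypothesis H2 : forall x, blk x != i0 -> (x \in tF b1) = (x \in tF b2).
Hypothesis H3 : cnt (val b1) i0 = cnt (val b2) i0.
Hypothesis H4 : lead b1 < i0.

Lemma twin_lead : lead b2 = lead b1.
Proof.
case: (leadP b1) => h1 h2; apply: lead_eq.
  by rewrite -H1 // neq_ltn H4.
move=> j hj; rewrite -H1; first exact: h2.
by rewrite neq_ltn (ltn_trans hj H4).
Qed.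

Lemma twin_Mp : Mp (val b1) = Mp (val b2).
Proof.
rewrite !Mp_lead twin_lead; apply: eq_forallb => i; congr (_ ==> _).
case: (boolP (i == i0)) => [/eqP ->|hi]; first by rewrite H3.
congr (_ == _); apply: cnt_eq_block; last exact: H1.
by move=> x /eqP hx; apply: H2; rewrite hx.
Qed.

Lemma twin_mu_face : mu_face b1 = mu_face b2.
Proof.
apply/setP => x; rewrite !mu_faceP twin_lead.
case: (boolP (blk x <= lead b1)) => hx; rewrite ?andbF ?andbT //.
by apply: H2; rewrite neq_ltn (leq_ltn_trans hx H4).
Qed.

Lemma twin_mu_star (R : pzRingType) (v : cochain k R) : mu_star v b1 = mu_star v b2.
Proof. by rewrite !mu_starE twin_Mp twin_mu_face. Qed.

End TwinS.

Lemma gext_valid (R : pzRingType) (p : pair) (hv : tvalid p) :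
  exists b : tbasis k, val b = p /\ forall g : tcochain k R, gext g p = g b.
Proof.
exists (Sub p hv); split; first by rewrite SubK.
by move=> g; rewrite -[in LHS](SubK (tbasis k) hv) gext_val.
Qed.

Lemma valid_delv (c : tbasis k) x :
  x \in tF c -> 1 < cnt (val c) (blk x) -> tvalid (tF c :\ x, te c).
Proof.
move=> hx h; rewrite tvalid_cnt /= valid_max andbT; apply/forallP => i.
rewrite cnt_delv pairE; case: ifP => hxi; last exact: valid_cnt.
move: hxi; rewrite in_setI blockP => /andP [_ /eqP <-]; lia.
Qed.

Lemma valid_dele (c : tbasis k) i :
  1 < cnt (val c) i -> tvalid (tF c, te c :\ i).
Proof.
move=> h; rewrite tvalid_cnt /= in_setD1 negb_and valid_max orbT andbT; apply/forallP => j.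
rewrite cnt_dele pairE; case: ifP => hj; last exact: valid_cnt.
by case/andP: hj => /eqP <- _; lia.
Qed.

Lemma sign_cancel (R : pzRingType) (P : nat) (u v : R) :
  ((-1) ^+ P * (u - v) = 0)%R -> u = v.
Proof.
move=> h; apply/eqP; rewrite -subr_eq0; apply/eqP.
have e : ((-1) ^+ P * (-1) ^+ P = 1 :> R)%R by rewrite -exprD addnn -mul2n exprM (_ : (-1) ^+ 2 = 1 :> R)%R ?expr1n // expr2 mulrNN mulr1.
by rewrite -[(u - v)%R]mul1r -e -mulrA h mulr0.
Qed.

Lemma cnt2_cases (c : tbasis k) i : cnt (val c) i = 2 ->
  (exists x, tF c :&: block k i = [set x] /\ i \in te c) \/
  (exists x y : 'I_(nverts k), x < y /\ tF c :&: block k i = [set x; y] /\ i \notin te c).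
Proof.
rewrite /cnt -/(tF c) -/(te c); case: (boolP (i \in te c)) => hi /=.
  by rewrite addn1 => -[] /eqP /cards1P [x hx]; left; exists x.
rewrite addn0 => /eqP /cards2P [x [y [hxy hF]]]; right.
case: (ltngtP x y) => h.
- by exists x, y.
- by exists y, x; split=> //; rewrite hF setUC.
- by move: hxy; rewrite (val_inj h) eqxx.
Qed.

Lemma mu_star_supp (R : pzRingType) (v : cochain k R) : supp (mu_star v).
Proof.
move=> b; rewrite mu_starE; apply: contraR => hb.
by rewrite big1 // => G _; rewrite (negbTE hb) andbF.
Qed.

Lemma mu_star_cob_supp (R : pzRingType) (v : cochain k R) : supp (tcobdry (mu_star v)).
Proof.
move=> c; apply: contraR => /forallPn [i0 /forallPn [j0]].
rewrite negb_imply => /andP [/andP [hji hj] hc].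
have hs := @mu_star_supp R v.
have hc1 := valid_cnt c i0.
case: (ltnP 2 (cnt (val c) i0)) => h3; first by rewrite (key3 hs hji hj (ltnW h3) h3).
have hc2 : cnt (val c) i0 = 2 by move: hc h3 hc1; case: (cnt (val c) i0) => [|[|[|]]].
have hlead : lead c < i0 by apply: leq_ltn_trans (lead_le hj) hji.
case: (cnt2_cases hc2) => [[x [hF hi]]|[x [y [hxy [hF hi]]]]].
- rewrite (key2a hs hji hj hF hi).
  have hxB : x \in tF c :&: block k i0 by rewrite hF set11.
  move: (hxB); rewrite in_setI blockP => /andP [hx /eqP hbx].
  have v1 : tvalid (tF c :\ x, te c) by apply: valid_delv => //; rewrite hbx hc2.
  have v2 : tvalid (tF c, te c :\ i0) by apply: valid_dele; rewrite hc2.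
  have [b1 [hb1 e1]] := gext_valid R v1.
  have [b2 [hb2 e2]] := gext_valid R v2.
  rewrite e1 e2 (@twin_mu_star b1 b2 i0) ?subrr ?mulr0 //.
  + by move=> i hi0; rewrite /te hb1 hb2 /= in_setD1 hi0.
  + move=> z hz; rewrite /tF hb1 hb2 /= in_setD1.
    by have -> : (z == x) = false by apply/negbTE; apply: contra hz => /eqP ->; rewrite hbx.
  + by rewrite hb1 hb2 cnt_delv cnt_dele hxB eqxx hi.
  + by apply: leq_ltn_trans hji; apply: lead_le; rewrite /te hb1.
- rewrite (key2b hs hji hj hxy hF hi).
  have hxB : x \in tF c :&: block k i0 by rewrite hF !inE eqxx.
  have hyB : y \in tF c :&: block k i0 by rewrite hF !inE eqxx orbT.
  move: (hxB); rewrite in_setI blockP => /andP [hx /eqP hbx].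
  move: (hyB); rewrite in_setI blockP => /andP [hy /eqP hby].
  have v1 : tvalid (tF c :\ x, te c) by apply: valid_delv => //; rewrite hbx hc2.
  have v2 : tvalid (tF c :\ y, te c) by apply: valid_delv => //; rewrite hby hc2.
  have [b1 [hb1 e1]] := gext_valid R v1.
  have [b2 [hb2 e2]] := gext_valid R v2.
  rewrite e1 e2 (@twin_mu_star b1 b2 i0) ?subrr ?mulr0 //.
  + by move=> i hi0; rewrite /te hb1 hb2.
  + move=> z hz; rewrite /tF hb1 hb2 /= !in_setD1.
    have -> : (z == x) = false by apply/negbTE; apply: contra hz => /eqP ->; rewrite hbx.
    by have -> : (z == y) = false by apply/negbTE; apply: contra hz => /eqP ->; rewrite hby.
  + by rewrite hb1 hb2 !cnt_delv hxB hyB.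
  + by apply: leq_ltn_trans hji; apply: lead_le; rewrite /te hb1.
Qed.

Lemma forward (R : pzRingType) (v : cochain k R) : tN0 (mu_star v).
Proof.
move=> l hl; rewrite !ole0_tnorm; split; apply/forallP => a; apply/implyP => ha.
  by move/bnorm_all: (@mu_star_supp R v a ha); apply.
by move/bnorm_all: (@mu_star_cob_supp R v a ha); apply.
Qed.

End Twin.

Section Canon.
Variable n : nat.
Variable k : 'I_n.+1 -> nat.
Hypothesis regular : 0 < k ord_max.

Lemma p0_lt : offset k ord_max < nverts k.
Proof.
rewrite offsetE nvertsE SS /= -addn1 leq_add2l.
by rewrite /kn (_ : inord n = ord_max) //; apply/val_inj; rewrite /= inordK.
Qed.

Definition p0 : 'I_(nverts k) := Ordinal p0_lt.

Lemma blk_p0 : blk p0 = ord_max.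
Proof.
apply/eqP; rewrite -blockP inE /= leqnn /= -{1}(addn0 (offset k ord_max)) ltn_add2l.
exact: regular.
Qed.

Lemma canon_exists (G : face k) :
  exists a : tbasis k, Mp (val a) /\ mu_face a = val G.
Proof.
have [x0 hx0] : exists x, x \in val G by apply/set0Pn; exact: (valP G).
case: (arg_maxnP (fun x => (blk x : nat)) hx0) => x1 hx1' hmax.
have hx1 : x1 \in val G := hx1'.
set m := blk x1.
pose F := if m == ord_max then val G else p0 |: val G.
pose e := [set i : 'I_n.+1 | (i != m) && (i != ord_max)].
have memF z : (z \in F) = (z \in val G) || ((m != ord_max) && (z == p0)).
  rewrite /F; case: ifP => _ /=; first by rewrite orbF.
  by rewrite in_setU1 orbC.
have hv : tvalid (F, e).
  rewrite tvalidP /= inE eqxx andbF andbT; apply/forallP => i; apply/implyP => /eqP h0.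
  move/setP: h0 => h0.
  rewrite inE; apply/andP; split.
    apply/eqP => him; move: (h0 x1); rewrite in_set0 in_setI memF hx1 /= blockP him.
    by rewrite /m eqxx.
  apply/eqP => him.
  case: (boolP (m == ord_max)) => hm.
    move: (h0 x1); rewrite in_set0 in_setI memF hx1 /= blockP him.
    by rewrite -(eqP hm) /m eqxx.
  move: (h0 p0); rewrite in_set0 in_setI memF hm eqxx orbT blockP blk_p0 him.
  by rewrite eqxx.
pose a : tbasis k := Sub (F, e) hv.
have hlead : lead a = m.
  apply: lead_eq; first by rewrite /te SubK /= inE eqxx.
  move=> j hj; rewrite /te SubK /= inE; apply/andP; split.
    by rewrite neq_ltn hj.
  by rewrite neq_ltn; apply/orP; left; apply: (leq_trans hj); rewrite -ltnS.
exists a; split.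
  rewrite Mp_lead hlead; apply/forallP => i; apply/implyP => hi.
  have Gi : forall z, z \in val G -> blk z != i.
    by move=> z hz; apply/eqP => hzi; have := hmax z hz; rewrite /= hzi -/m leqNgt hi.
  rewrite /cnt SubK /=.
  case: (boolP (i == ord_max)) => [/eqP him|him].
    have hm : m != ord_max by apply/eqP => hm; move: hi; rewrite hm him ltnn.
    have -> : F :&: block k i = [set p0].
      apply/setP => z; rewrite in_setI memF blockP in_set1 hm /=.
      case: (boolP (z \in val G)) => hz /=; first by rewrite (negbTE (Gi z hz)); apply/esym/negbTE;
        apply: contraNneq (Gi z hz) => ->; rewrite blk_p0 him.
      by case: eqP => // ->; rewrite blk_p0 him eqxx.
    by rewrite cards1 inE him eqxx andbF.
  have -> : F :&: block k i = set0.
    apply/setP => z; rewrite in_setI memF blockP inE.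
    case: (boolP (z \in val G)) => hz /=; first by rewrite (negbTE (Gi z hz)).
    by case: (z =P p0) => [->|]; rewrite ?andbF // blk_p0 (eq_sym ord_max) (negbTE him) andbF.
  rewrite cards0 inE him andbT add0n.
  by rewrite (_ : (i != m) = true) //; apply/eqP => him'; move: hi; rewrite him' ltnn.
apply/setP => z; rewrite mu_faceP hlead /tF SubK /= memF.
case: (boolP (z \in val G)) => hz /=; first exact: hmax z hz.
case: (z =P p0) => [->|]; rewrite ?andbF //= blk_p0 andbT.
case: (m =P ord_max) => [//|hm] /=; apply/negbTE; rewrite -ltnNge.
move: (ltn_ord m); rewrite ltnS leq_eqVlt => /orP [/eqP ee|//].
by case: hm; apply/val_inj.
Qed.

End Canon.

Section Step.
Variable n : nat.
Variable k : 'I_n.+1 -> nat.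
Variable R : pzRingType.
Variables (w : tcochain k R) (a a' : tbasis k) (i : 'I_n.+1).
Hypotheses (hw : supp w) (hdw : supp (tcobdry w)).
Hypothesis A1 : forall j, j != i -> (j \in te a) = (j \in te a').
Hypothesis A2 : forall x, blk x != i -> (x \in tF a) = (x \in tF a').
Hypothesis L : lead a < i.

Local Notation Fc := (tF a :|: tF a').
Local Notation ec := (te a :|: te a').

Lemma hvc : tvalid (Fc, ec).
Proof.
rewrite tvalidP; apply/andP; split; last by rewrite /= in_setU negb_or (valid_max a) (valid_max a').
apply/forallP => j; apply/implyP => /eqP /= h0.
rewrite in_setU; case/andP: (valP a) => /forallP /(_ j) /implyP -> //.
apply/eqP/setP => z; rewrite in_setI in_set0; move/setP: h0 => /(_ z).
by rewrite in_setI in_setU in_set0 andb_orl => /norP [/negbTE -> _].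
Qed.

Local Notation c := (Sub (Fc, ec) hvc : tbasis k).

Lemma tFc : tF c = Fc. Proof. by rewrite /tF SubK. Qed.
Lemma tec : te c = ec. Proof. by rewrite /te SubK. Qed.

Lemma lead_notin : lead a \notin te c.
Proof.
case: (leadP a) => h _; rewrite tec in_setU negb_or h /= -A1 //.
by rewrite neq_ltn L.
Qed.

Lemma dw0 : 2 = cnt (val c) i -> tcobdry w c = 0%R.
Proof.
move=> h2; apply/eqP/negPn/negP => hne; move: (hdw hne); apply/negP.
apply: (notMp_wit L); first exact: lead_notin.
by rewrite -h2.
Qed.

Lemma stepB y : tF a :&: block k i = set0 -> i \in te a ->
  tF a' :&: block k i = [set y] -> i \notin te a' -> w a = w a'.
Proof.
move=> hA hi hA' hi'.
have mA z : blk z == i -> (z \in tF a) = false.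
  by move=> hz; move/setP: hA => /(_ z); rewrite in_setI in_set0 blockP hz andbT.
have mA' z : blk z == i -> (z \in tF a') = (z == y).
  by move=> hz; move/setP: hA' => /(_ z); rewrite in_setI in_set1 blockP hz andbT.
have hy : blk y == i.
  have : y \in tF a' :&: block k i by rewrite hA' set11.
  by rewrite in_setI blockP => /andP [].
have hFc : tF c :&: block k i = [set y].
  apply/setP => z; rewrite tFc in_setI in_setU blockP in_set1.
  case: (boolP (blk z == i)) => hz; last first.
    by rewrite !andbF; apply/esym/negbTE; apply: contra hz => /eqP ->.
  by rewrite mA // mA' // andbT.
have hic : i \in te c by rewrite tec in_setU hi.
have h2 : 2 = cnt (val c) i by rewrite /cnt -/(tF c) hFc cards1 -/(te c) hic.
have := dw0 h2.
rewrite (key2a hw L lead_notin hFc hic) => /sign_cancel.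
have -> : (tF c :\ y, te c) = val a.
  rewrite tFc tec -pairE; congr pair; apply/setP => z.
    rewrite in_setD1 in_setU; case: (boolP (blk z == i)) => hz.
      by rewrite mA // mA' //=; case: (z == y).
    rewrite -A2 // orbb; case: (z =P y) => //= e0.
    by move: hz; rewrite e0 hy.
  rewrite in_setU; case: (boolP (z == i)) => [/eqP ->|hz]; first by rewrite hi.
  by rewrite -A1 // orbb.
have -> : (tF c, te c :\ i) = val a'.
  rewrite tFc tec -pairE; congr pair; apply/setP => z.
    rewrite in_setU; case: (boolP (blk z == i)) => hz; first by rewrite mA.
    by rewrite -A2 // orbb.
  rewrite in_setD1 in_setU; case: (boolP (z == i)) => [/eqP ->|hz] /=; first by rewrite (negbTE hi').
  by rewrite -A1 // orbb.
by rewrite !gext_val.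
Qed.

Lemma stepD (x y : 'I_(nverts k)) : (x < y)%N -> tF a :&: block k i = [set x] -> i \notin te a ->
  tF a' :&: block k i = [set y] -> i \notin te a' -> w a = w a'.
Proof.
move=> hxy hA hi hA' hi'.
have mA z : blk z == i -> (z \in tF a) = (z == x).
  by move=> hz; move/setP: hA => /(_ z); rewrite in_setI in_set1 blockP hz andbT.
have mA' z : blk z == i -> (z \in tF a') = (z == y).
  by move=> hz; move/setP: hA' => /(_ z); rewrite in_setI in_set1 blockP hz andbT.
have hx : blk x == i.
  have : x \in tF a :&: block k i by rewrite hA set11.
  by rewrite in_setI blockP => /andP [].
have hy : blk y == i.
  have : y \in tF a' :&: block k i by rewrite hA' set11.
  by rewrite in_setI blockP => /andP [].
have hFc : tF c :&: block k i = [set x; y].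
  apply/setP => z; rewrite tFc in_setI in_setU blockP !inE.
  case: (boolP (blk z == i)) => hz; last first.
    rewrite !andbF; apply/esym/negbTE; rewrite negb_or.
    by apply/andP; split; apply: contra hz => /eqP ->.
  by rewrite mA // mA' // andbT.
have hic : i \notin te c by rewrite tec in_setU negb_or hi.
have hxy' : x != y by rewrite neq_ltn hxy.
have h2 : 2 = cnt (val c) i by rewrite /cnt -/(tF c) hFc cards2 hxy' -/(te c) (negbTE hic).
have := dw0 h2.
rewrite (key2b hw L lead_notin hxy hFc hic) => /sign_cancel.
have ee : te c = te a.
  rewrite tec; apply/setP => j; rewrite in_setU; case: (boolP (j == i)) => [/eqP ->|hz].
    by rewrite (negbTE hi) (negbTE hi').
  by rewrite -A1 // orbb.
have -> : (tF c :\ x, te c) = val a'.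
  rewrite tFc ee -pairE; congr pair; last first.
    apply/setP => j; case: (boolP (j == i)) => [/eqP ->|hz]; first by rewrite (negbTE hi) (negbTE hi').
    by rewrite A1.
  apply/setP => z; rewrite in_setD1 in_setU; case: (boolP (blk z == i)) => hz.
    rewrite mA // mA' //; case: (z =P x) => [->|] //=.
    by rewrite (negbTE hxy').
  rewrite -A2 // orbb; case: (z =P x) => //= e0.
  by move: hz; rewrite e0 hx.
have -> : (tF c :\ y, te c) = val a.
  rewrite tFc ee -pairE; congr pair.
  apply/setP => z; rewrite in_setD1 in_setU; case: (boolP (blk z == i)) => hz.
    rewrite mA // mA' //; case: (z =P y) => [->|] //=; first by rewrite eq_sym (negbTE hxy').
    by rewrite orbF.
  rewrite -A2 // orbb; case: (z =P y) => //= e0.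
  by move: hz; rewrite e0 hy.
by rewrite !gext_val => ->.
Qed.

End Step.

Section Conn.
Variable n : nat.
Variable k : 'I_n.+1 -> nat.
Variable R : pzRingType.

Lemma cnt1_cases (b : tbasis k) i : cnt (val b) i = 1 ->
  (tF b :&: block k i = set0 /\ i \in te b) \/
  (exists x, tF b :&: block k i = [set x] /\ i \notin te b).
Proof.
rewrite /cnt -/(tF b) -/(te b); case: (boolP (i \in te b)) => hi /=.
  by rewrite addn1 => -[] /eqP; rewrite cards_eq0 => /eqP h; left.
by rewrite addn0 => /eqP /cards1P [x hx]; right; exists x.
Qed.

Lemma step (w : tcochain k R) (a a' : tbasis k) (i : 'I_n.+1) :
  supp w -> supp (tcobdry w) ->
  (forall j, j != i -> (j \in te a) = (j \in te a')) ->
  (forall x, blk x != i -> (x \in tF a) = (x \in tF a')) ->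
  lead a < i -> cnt (val a) i = 1 -> cnt (val a') i = 1 ->
  (tF a :&: block k i != tF a' :&: block k i) || ((i \in te a) != (i \in te a')) ->
  w a = w a'.
Proof.
move=> hw hdw A1 A2 L C1 C1' D.
have A1' j : j != i -> (j \in te a') = (j \in te a) by move=> h; rewrite A1.
have A2' x : blk x != i -> (x \in tF a') = (x \in tF a) by move=> h; rewrite A2.
have L' : lead a' < i by rewrite (twin_lead A1 L).
case: (cnt1_cases C1) => [[hA hi]|[x [hA hi]]];
case: (cnt1_cases C1') => [[hA' hi']|[y [hA' hi']]].
- by move: D; rewrite hA hA' hi hi' eqxx.
- exact: (stepB hw hdw A1 A2 L hA hi hA' hi').
- by apply/esym; apply: (stepB hw hdw A1' A2' L' hA' hi' hA hi).
- case: (ltngtP x y) => h.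
  + exact: (stepD hw hdw A1 A2 L h hA hi hA' hi').
  + by apply/esym; apply: (stepD hw hdw A1' A2' L' h hA' hi' hA hi).
  + by move: D; rewrite hA hA' (val_inj h) (negbTE hi) (negbTE hi') !eqxx.
Qed.

Lemma lead_mu (a b : tbasis k) : mu_face a = mu_face b -> (lead a <= lead b)%N.
Proof.
move=> hmu; case: (leadP a) => h _.
case/set0Pn: (valid_nonempty h) => x; rewrite in_setI blockP => /andP [hx /eqP hb].
have : x \in mu_face a by rewrite mu_faceP hx hb leqnn.
by rewrite hmu mu_faceP hb => /andP [].
Qed.

Lemma D_low (a b : tbasis k) (i : 'I_n.+1) : mu_face a = mu_face b -> (i <= lead a)%N ->
  (tF a :&: block k i = tF b :&: block k i) /\ ((i \in te a) = (i \in te b)).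
Proof.
move=> hmu hi.
have el : lead a = lead b by apply/val_inj/eqP; rewrite eqn_leq !lead_mu.
split.
  have := mu_face_block a i; rewrite hi => <-.
  by have := mu_face_block b i; rewrite -el hi => <-; rewrite hmu.
case: (leadP a) => ha1 ha2; case: (leadP b) => hb1 hb2.
move: hi; rewrite leq_eqVlt => /orP [/eqP e|h].
  have -> : i = lead a by apply/val_inj.
  by rewrite (negbTE ha1) el (negbTE hb1).
by rewrite ha2 // hb2 // -el.
Qed.

Definition Dset (a b : tbasis k) : {set 'I_n.+1} :=
  [set i | (tF a :&: block k i != tF b :&: block k i) || ((i \in te a) != (i \in te b))].

Lemma DsetE (a b : tbasis k) j :
  (j \in Dset a b) = (tF a :&: block k j != tF b :&: block k j) || ((j \in te a) != (j \in te b)).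
Proof. by rewrite inE. Qed.

Lemma D0_eq (a b : tbasis k) : Dset a b = set0 -> a = b.
Proof.
move=> h0; have nd j : j \notin Dset a b by rewrite h0 in_set0.
apply/val_inj; rewrite -!pairE; congr pair; apply/setP => z.
  move: (nd (blk z)); rewrite inE negb_or negbK => /andP [/eqP /setP /(_ z) e _].
  move: (nd (blk z)); rewrite inE negb_or => /andP [/negPn /eqP ee _].
  by move/setP: ee => /(_ z); rewrite !in_setI in_blk !andbT.
by move: (nd z); rewrite inE negb_or => /andP [_ /negPn /eqP].
Qed.

Lemma connect_w (w : tcochain k R) : supp w -> supp (tcobdry w) ->
  forall a b : tbasis k, Mp (val a) -> Mp (val b) -> mu_face a = mu_face b -> w a = w b.
Proof.
move=> hw hdw.
suff H : forall d a b, (#|Dset a b| <= d)%N -> Mp (val a) -> Mp (val b) ->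
    mu_face a = mu_face b -> w a = w b.
  by move=> a b; apply: H (leqnn _).
elim => [|d IH] a b hd ha hb hmu.
  by rewrite (D0_eq (cards0_eq (_ : #|Dset a b| = 0))) //; lia.
case: (set_0Vmem (Dset a b)) => [/D0_eq -> //|[i hi]].
have el : lead a = lead b by apply/val_inj/eqP; rewrite eqn_leq !lead_mu.
have L : lead a < i.
  rewrite ltnNge; apply/negP => hle; have [e1 e2] := D_low hmu hle.
  by move: hi; rewrite inE e1 e2 !eqxx.
pose F' := (tF a :\: block k i) :|: (tF b :&: block k i).
pose e' := (te a :\ i) :|: (te b :&: [set i]).
have mF z : (z \in F') = if blk z == i then z \in tF b else z \in tF a.
  rewrite /F' in_setU in_setD !in_setI blockP; case: (blk z == i) => /=.
    by rewrite andbT.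
  by rewrite andbF orbF.
have me j : (j \in e') = if j == i then j \in te b else j \in te a.
  rewrite /e' in_setU in_setD1 in_setI in_set1; case: (j =P i) => [->|] /=.
    by rewrite andbT.
  by rewrite andbF orbF.
have cE j : cnt (F', e') j = if j == i then cnt (val b) j else cnt (val a) j.
  case: (j =P i) => [->|/eqP hj].
    apply: cnt_eq_block => [z /eqP hz|]; first by rewrite mF hz eqxx /tF.
    by rewrite /= me eqxx.
  apply: cnt_eq_block => [z /eqP hz|]; first by rewrite mF hz (negbTE hj) /tF.
  by rewrite /= me (negbTE hj).
have hv : tvalid (F', e').
  rewrite tvalid_cnt; apply/andP; split.
    by apply/forallP => j; rewrite cE; case: ifP => _; apply: valid_cnt.
  rewrite /= me; case: ifP => _; exact: valid_max.
pose a' : tbasis k := Sub (F', e') hv.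
have ta' j : (j \in te a') = if j == i then j \in te b else j \in te a by rewrite /te SubK me.
have fa' z : (z \in tF a') = if blk z == i then z \in tF b else z \in tF a by rewrite /tF SubK mF.
have A1 j : j != i -> (j \in te a) = (j \in te a') by move=> hj; rewrite ta' (negbTE hj).
have A2 z : blk z != i -> (z \in tF a) = (z \in tF a') by move=> hz; rewrite fa' (negbTE hz).
have C1 : cnt (val a) i = 1 by move: ha; rewrite Mp_lead => /forallP /(_ i) /implyP /(_ L) /eqP.
have C1b : cnt (val b) i = 1 by move: hb; rewrite Mp_lead -el => /forallP /(_ i) /implyP /(_ L) /eqP.
have C1' : cnt (val a') i = 1 by rewrite SubK cE eqxx.
have blkeq j : tF a' :&: block k j = if j == i then tF b :&: block k j else tF a :&: block k j.
  apply/setP => z; rewrite in_setI fa' blockP.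
  case: (j =P i) => [->|hji]; rewrite in_setI blockP.
    by case: (boolP (blk z == i)); rewrite ?andbT ?andbF.
  case: (boolP (blk z == j)) => [/eqP hz|]; rewrite ?andbT ?andbF //.
  by rewrite hz; move/eqP/negbTE: hji => ->.
have Dif : (tF a :&: block k i != tF a' :&: block k i) || ((i \in te a) != (i \in te a')).
  have ti : (i \in te a') = (i \in te b) by rewrite /te SubK me eqxx.
  by rewrite blkeq eqxx ti; move: hi; rewrite inE.
rewrite (step hw hdw A1 A2 L C1 C1' Dif).
apply: IH.
- have sub : Dset a' b \subset Dset a b :\ i.
    apply/subsetP => j; rewrite in_setD1 !DsetE blkeq ta'.
    case: (j =P i) => [->|_] /=; first by rewrite !eqxx.
    by [].
  have := subset_leq_card sub; move: hd; rewrite (cardsD1 i (Dset a b)) hi add1n => hd' h; lia.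
- by rewrite -(twin_Mp A1 A2 _ L) // C1 C1'.
- exact: hb.
- by rewrite -(twin_mu_face A1 A2 L).
Qed.

End Conn.

Lemma mu_star_canon (n : nat) (k : 'I_n.+1 -> nat) (R : pzRingType) (v : cochain k R)
  (a : tbasis k) (G : face k) : Mp (val a) -> mu_face a = val G -> mu_star v a = v G.
Proof.
move=> ha hG; rewrite mu_starE (bigD1 G) //= hG eqxx ha /= big1 ?addr0 // => G' hG'.
rewrite andbT; case: eqP => // ee; by case/eqP: hG'; apply/val_inj.
Qed.

Lemma mu_face_nonempty (n : nat) (k : 'I_n.+1 -> nat) (a : tbasis k) : mu_face a != set0.
Proof.
case: (leadP a) => h _; case/set0Pn: (valid_nonempty h) => x.
rewrite in_setI blockP => /andP [hx /eqP hb].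
by apply/set0Pn; exists x; rewrite mu_faceP hx hb leqnn.
Qed.

Lemma tN0_supp (n : nat) (k : 'I_n.+1 -> nat) (R : pzRingType) (w : tcochain k R) :
  tN0 w -> supp w /\ supp (tcobdry w).
Proof.
move=> h; split => b hb; apply/bnorm_all => l hl; have [h1 h2] := h l hl.
  by move: h1; rewrite ole0_tnorm => /forallP /(_ b) /implyP; apply.
by move: h2; rewrite ole0_tnorm => /forallP /(_ b) /implyP; apply.
Qed.

Unset Implicit Arguments.
Local Open Scope ring_scope.

Theorem mainTheorem3 (R : comPzRingType) (n : nat) (k : 'I_n.+1 -> nat)
    (regular : (0 < k ord_max)%N) :
  injective (@mu_star n k R) /\
  (forall w : tcochain k R, (exists v : cochain k R, mu_star v = w) <-> tN0 w).
Proof.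
split.
  move=> v1 v2 h; apply/ffunP => G.
  have [a [ha hG]] := canon_exists regular G.
  by rewrite -(mu_star_canon v1 ha hG) -(mu_star_canon v2 ha hG) h.
move=> w; split.
  by case=> v <-; apply: forward.
move=> hN; have [hw hdw] := tN0_supp hN.
pose v : cochain k R := [ffun G => if [pick a | Mp (val a) && (mu_face a == val G)] is Some a
                                   then w a else 0].
exists v; apply/ffunP => a.
case: (boolP (Mp (val a))) => ha.
  pose G0 : face k := Sub (mu_face a) (mu_face_nonempty a).
  rewrite (mu_star_canon v ha (_ : mu_face a = val G0)); last by rewrite SubK.
  rewrite ffunE; case: pickP => [a1 /andP [ha1 /eqP h1]|hn].
    by apply: (connect_w hw hdw ha1 ha); rewrite h1 SubK.
  by move: (hn a); rewrite ha SubK eqxx.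
have e1 : mu_star v a = 0.
  by apply/eqP; apply: contraR ha => /mu_star_supp.
have e2 : w a = 0 by apply/eqP; apply: contraR ha => /hw.
by rewrite e1 e2.
Qed.
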